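(* Let $n\ge1$ and let $\Gamma$ be a finite undirected graph on exactly $n$ vertices, without loops but possibly with multiple edges, together with an edge colouring $c:E(\Gamma)\to\{\text{magenta},\text{yellow},\text{cyan}\}$ that is injective on the set of edges joining any given pair of distinct vertices. Then $\Sigma(\Gamma)\le n$, with equality if and only if every cycle of $\Gamma$ is monochromatic (different cycles may have different colours).
   Context: Let $\Gamma_{my}$ (resp. $\Gamma_{yc}$, $\Gamma_{mc}$) be the spanning subgraph of $\Gamma$ with all vertices of $\Gamma$ and only the magenta and yellow (resp. yellow and cyan, magenta and cyan) edges. For a connected component $C$ of $\Gamma$ and colours $\in\{my,yc,mc\}$, let $\operatorname{val}_{colors}(C)$ be the number of connected components of $C\cap\Gamma_{colors}$. Define \[\Sigma(\Gamma)=\sum_{C}\big(\operatorname{val}_{my}(C)+\operatorname{val}_{yc}(C)+\operatorname{val}_{mc}(C)-2\big),\] the sum over all connected components $C$ of $\Gamma$. A cycle is a closed path $x_0e_0x_1e_1\dots x_ke_kx_0$ with pairwise distinct vertices $x_i$ and edges $e_i$ joining consecutive vertices; it is monochromatic if all its edges have the same colour. *)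

(* Defs.v *)
From mathcomp Require Import all_boot all_order all_algebra.
Set Implicit Arguments. Unset Strict Implicit. Unset Printing Implicit Defensive.

Definition colour := 'I_3.
Definition magenta : colour := @Ordinal 3 0 erefl.
Definition yellow  : colour := @Ordinal 3 1 erefl.
Definition cyan    : colour := @Ordinal 3 2 erefl.

Definition col_my : {set colour} := [set magenta; yellow].
Definition col_yc : {set colour} := [set yellow; cyan].
Definition col_mc : {set colour} := [set magenta; cyan].
Definition col_all : {set colour} := setT.

Section Graph.
(* A finite multigraph on the vertex set 'I_n: a finite type E of edges,
   each edge e having (unordered) endpoints ends e (stored as an ordered
   pair, orientation irrelevant) and a colour col e. *)
Variables (n : nat) (E : finType) (ends : E -> 'I_n * 'I_n) (col : E -> colour).

Definition joins (e : E) (x y : 'I_n) : bool :=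
  (ends e == (x, y)) || (ends e == (y, x)).

Definition loopless : Prop := forall e : E, (ends e).1 != (ends e).2.

Definition colouring_injective_on_pairs : Prop :=
  forall (x y : 'I_n) (e e' : E), x != y -> joins e x y -> joins e' x y ->
    col e = col e' -> e = e'.

Definition adj (S : {set colour}) : rel 'I_n :=
  fun x y => [exists e, (col e \in S) && joins e x y].

Definition comp_of (S : {set colour}) (x : 'I_n) : {set 'I_n} :=
  [set y | connect (adj S) x y].

Definition components : {set {set 'I_n}} := [set comp_of col_all x | x : 'I_n].

(* number of connected components of C /\ Gamma_S *)
Definition val (S : {set colour}) (C : {set 'I_n}) : nat :=
  #|[set comp_of S x | x in C]|.

Definition Sigma : int :=
  (\sum_(C in components)
     ((val col_my C)%:Z + (val col_yc C)%:Z + (val col_mc C)%:Z - 2%:Z))%R.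

(* a cycle x_0 e_0 x_1 e_1 ... x_k e_k x_0, given by v : 'I_(k+1) -> vertices
   and e : 'I_(k+1) -> edges, with pairwise distinct vertices, pairwise
   distinct edges, and e_i joining x_i and x_{i+1} (indices mod k+1). *)
Definition is_cycle (k : nat) (v : 'I_k.+1 -> 'I_n) (e : 'I_k.+1 -> E) : Prop :=
  injective v /\ injective e /\ forall i : 'I_k.+1, joins (e i) (v i) (v (ordS i)).

Definition monochromatic (k : nat) (e : 'I_k.+1 -> E) : Prop :=
  forall i j : 'I_k.+1, col (e i) = col (e j).

Definition all_cycles_monochromatic : Prop :=
  forall (k : nat) (v : 'I_k.+1 -> 'I_n) (e : 'I_k.+1 -> E),
    is_cycle v e -> monochromatic e.
End Graph.

(* Main.v *)
Require Import Defs.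
From mathcomp Require Import all_boot all_order all_algebra.
Import Order.TTheory GRing.Theory Num.Theory.
From mathcomp Require Import zify.
Set Implicit Arguments. Unset Strict Implicit. Unset Printing Implicit Defensive.

Section G.
Variables (n : nat) (E : finType) (ends : E -> 'I_n * 'I_n).

Definition adjF (F : {set E}) : rel 'I_n :=
  fun x y => [exists f, (f \in F) && joins ends f x y].
Definition compF F x : {set 'I_n} := [set y | connect (adjF F) x y].
Definition kap F := #|[set compF F x | x : 'I_n]|.
Definition dl F e := ~~ connect (adjF F) (ends e).1 (ends e).2.

Lemma joinsC f x y : joins ends f x y = joins ends f y x.
Proof. by rewrite /joins orbC. Qed.

Lemma adjF_sym F : symmetric (adjF F).
Proof.
move=> x y; apply/existsP/existsP=> -[f /andP[H1 H2]]; exists f;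
  by rewrite H1 joinsC.
Qed.

Lemma csym F : connect_sym (adjF F).
Proof. exact: sym_connect_sym (adjF_sym F). Qed.

Lemma connect_mono (F G : {set E}) x y : F \subset G ->
  connect (adjF F) x y -> connect (adjF G) x y.
Proof.
move=> sFG; apply: connect_sub => u v /existsP[f /andP[fF j]].
apply: connect1; apply/existsP; exists f; rewrite j andbT.
exact: (subsetP sFG).
Qed.

Lemma compF_eq F x y : (compF F x == compF F y) = connect (adjF F) x y.
Proof.
apply/eqP/idP => [H|H].
  have : y \in compF F y by rewrite inE connect0.
  by rewrite -H inE.
apply/setP => z; rewrite !inE; apply/idP/idP => Hz.
  by apply: connect_trans Hz; rewrite csym.
exact: connect_trans Hz.
Qed.

Lemma joins_ends f : joins ends f (ends f).1 (ends f).2.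
Proof. by rewrite /joins -surjective_pairing eqxx. Qed.

Lemma adjU e F x y : adjF (e |: F) x y = adjF F x y || joins ends e x y.
Proof.
apply/existsP/orP => [[f /andP[]]|].
  rewrite in_setU1 => /orP[/eqP -> -> | fF j]; [by right|left].
  by apply/existsP; exists f; rewrite fF.
case=> [/existsP[f /andP[fF j]]|j]; first by exists f; rewrite in_setU1 fF orbT.
by exists e; rewrite setU11.
Qed.

Lemma joins_ab e x y : joins ends e x y ->
  ((x == (ends e).1) && (y == (ends e).2)) || ((x == (ends e).2) && (y == (ends e).1)).
Proof.
by rewrite /joins; case: (ends e) => a b /= /orP[] /eqP [-> ->]; rewrite !eqxx ?orbT.
Qed.

Lemma connect_ind_gen (r : rel 'I_n) (P : 'I_n -> Prop) x y :
  (forall u v, P u -> r u v -> P v) -> P x -> connect r x y -> P y.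
Proof.
move=> HP Px /connectP[p pp ->]; elim: p x Px pp => //= z p IH x Px /andP[rxz pz].
exact: IH (HP _ _ Px rxz) pz.
Qed.

Section Add.
Variables (F : {set E}) (e : E).
Local Notation a := (ends e).1.
Local Notation b := (ends e).2.
Local Notation c := (connect (adjF F)).
Local Notation cc := (connect (adjF (e |: F))).

Lemma connU x y : cc x y = [|| c x y, c x a && c b y | c x b && c a y].
Proof.
apply/idP/idP.
  apply: (connect_ind_gen (P := fun y => [|| c x y, c x a && c b y | c x b && c a y])).
  - move=> u v H; rewrite adjU => /orP[adj|j].
      have cuv : c u v by apply: connect1.
      case/or3P: H => [H|/andP[H1 H2]|/andP[H1 H2]].
      + by rewrite (connect_trans H cuv).
      + by rewrite H1 (connect_trans H2 cuv) orbT.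
      + by rewrite H1 (connect_trans H2 cuv) !orbT.
    case/orP: (joins_ab j) => /andP[/eqP eu /eqP ev]; subst u v.
    + case/or3P: H => [H|/andP[H1 H2]|/andP[H1 H2]].
      * by rewrite H connect0 orbT.
      * by rewrite H1 connect0 orbT.
      * by rewrite H1.
    + case/or3P: H => [H|/andP[H1 H2]|/andP[H1 H2]].
      * by rewrite H connect0 !orbT.
      * by rewrite H1.
      * by rewrite H1 connect0 !orbT.
  - by rewrite connect0.
have sub : F \subset e |: F by apply/subsetP => z zF; rewrite in_setU1 zF orbT.
have cab : cc a b by apply: connect1; rewrite adjU joins_ends orbT.
have cba : cc b a by rewrite csym.
case/or3P => [H|/andP[H1 H2]|/andP[H1 H2]].
- exact: connect_mono H.
- apply: connect_trans (connect_mono sub H1) _.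
  exact: connect_trans cab (connect_mono sub H2).
- apply: connect_trans (connect_mono sub H1) _.
  exact: connect_trans cba (connect_mono sub H2).
Qed.


Lemma same_c x y z : c x y -> c x z = c y z.
Proof.
move=> H; apply/idP/idP => H'; last exact: connect_trans H H'.
by apply: connect_trans H'; rewrite csym.
Qed.

Lemma compU x : compF (e |: F) x =
  if c x a || c x b then compF F a :|: compF F b else compF F x.
Proof.
apply/setP => z; rewrite !inE connU.
case: (boolP (c x a)) => xa /=.
  rewrite (same_c z xa) !inE.
  by case: (c a z); case: (c b z); case: (c x b).
case: (boolP (c x b)) => xb /=; last by rewrite orbF inE.
by rewrite (same_c z xb) !inE orbC.
Qed.

Lemma kap_add : kap (e |: F) + dl F e = kap F.
Proof.
rewrite /kap /dl.
set cA := compF F a; set cB := compF F b.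
pose h X := if (X == cA) || (X == cB) then cA :|: cB else X.
have -> : [set compF (e |: F) x | x : 'I_n] = h @: [set compF F x | x : 'I_n].
  rewrite -imset_comp; apply: eq_imset => x /=.
  by rewrite compU /h /cA /cB !compF_eq.
set P := [set compF F x | x : 'I_n].
have cAP : cA \in P by apply: imset_f.
have cBP : cB \in P by apply: imset_f.
case: (boolP (c a b)) => ab /=.
  have eAB : cA = cB by apply/eqP; rewrite compF_eq.
  rewrite addn0; congr #|_|.
  have hid : h =1 id by move=> X; rewrite /h -eAB setUid orbb; case: eqP.
  by rewrite (eq_imset _ hid) imset_id.
have nAB : cA != cB by rewrite compF_eq.
rewrite (cardsD1 cA P) cAP addnC; congr (_ + _).
rewrite -{1}(setD1K cAP) imsetU1.
have hAB : h cA = h cB by rewrite /h !eqxx orbT.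
have cBP' : cB \in P :\ cA by rewrite !inE eq_sym nAB cBP.
rewrite (setUidPr _); last by rewrite sub1set hAB imset_f.
apply: card_in_imset => X Y; rewrite !inE => /andP[XA XP] /andP[YA YP].
have key : forall Z, Z \in P -> Z != cA -> Z != cA :|: cB.
  move=> Z /imsetP[z _ ->] zA; apply/eqP => Ze.
  have : a \in compF F z by rewrite Ze !inE connect0.
  rewrite inE -compF_eq => /eqP zeq.
  by rewrite zeq eqxx in zA.
rewrite /h (negbTE XA) (negbTE YA) /=.
case: (X =P cB) => [->|_]; case: (Y =P cB) => [->|_] //= E1.
  by move: (key Y YP YA); rewrite -E1 eqxx.
by move: (key X XP XA); rewrite E1 eqxx.
Qed.

End Add.
End G.

Section C.
Variables (n : nat) (E : finType) (ends : E -> 'I_n * 'I_n) (col : E -> colour).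

Lemma kap0 : kap ends set0 = n.
Proof.
rewrite /kap.
have -> : [set compF ends set0 x | x : 'I_n] = [set [set x] | x : 'I_n].
  apply: eq_imset => x; apply/setP => y; rewrite !inE.
  apply/idP/idP => [/connectP[[|z p] /= H ->]|/eqP->]; last exact: connect0.
    by rewrite eqxx.
  by case/andP: H => /existsP[f]; rewrite inE.
by rewrite card_imset ?card_ord //; apply: set1_inj.
Qed.

Lemma dl_mono (F G : {set E}) e : F \subset G -> dl ends G e -> dl ends F e.
Proof. by move=> sFG; apply: contra; apply: connect_mono. Qed.

Definition cls (S : {set colour}) : {set E} := [set f | col f \in S].

Lemma kapS_add (F : {set E}) e (S : {set colour}) :
  kap ends ((e |: F) :&: cls S) + ((col e \in S) && dl ends (F :&: cls S) e)
  = kap ends (F :&: cls S).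
Proof.
case: (boolP (col e \in S)) => cS /=.
  have -> : (e |: F) :&: cls S = e |: (F :&: cls S).
    by rewrite setIUl; congr (_ :|: _); apply/setP => z; rewrite !inE;
       case: eqP => // ->; rewrite cS.
  exact: kap_add.
rewrite addn0; congr kap; rewrite setIUl.
have -> : [set e] :&: cls S = set0.
  by apply/setP => z; rewrite !inE; case: eqP => // ->; rewrite (negbTE cS).
by rewrite set0U.
Qed.

Local Open Scope ring_scope.

Definition Phi (F : {set E}) : int :=
  (n%:Z + 2 * (kap ends F)%:Z - (kap ends (F :&: cls col_my))%:Z
   - (kap ends (F :&: cls col_yc))%:Z - (kap ends (F :&: cls col_mc))%:Z).

Definition dS (F : {set E}) e (S : {set colour}) := (col e \in S) && dl ends (F :&: cls S) e.

Lemma Phi_step (F : {set E}) e :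
  Phi (e |: F) = Phi F + ((dS F e col_my)%:Z + (dS F e col_yc)%:Z + (dS F e col_mc)%:Z)
                 - 2 * (dl ends F e)%:Z.
Proof.
rewrite /Phi /dS.
have h0 := kap_add ends F e.
have h1 := kapS_add F e col_my.
have h2 := kapS_add F e col_yc.
have h3 := kapS_add F e col_mc.
lia.
Qed.

Lemma two_pairs (c : colour) : ((c \in col_my) + (c \in col_yc) + (c \in col_mc) = 2)%N.
Proof.
rewrite /colour in c *; case: c => m Hm.
by do 3?[case: m Hm => [|m] Hm //]; rewrite !inE.
Qed.

Lemma Phi_step_ge (F : {set E}) e : Phi F <= Phi (e |: F).
Proof.
rewrite Phi_step.
case: (boolP (dl ends F e)) => d.
  have hS : forall S, dS F e S = (col e \in S).
    by move=> S; rewrite /dS; case: (col e \in S) => //=; apply: dl_mono d; apply: subsetIl.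
  rewrite !hS; have := two_pairs (col e).
  by case: (col e \in col_my); case: (col e \in col_yc); case: (col e \in col_mc) => /= H; lia.
by case: (dS F e col_my); case: (dS F e col_yc); case: (dS F e col_mc) => /=; lia.
Qed.

Lemma Phi_mono (F G : {set E}) : F \subset G -> Phi F <= Phi G.
Proof.
move Hk : #|G :\: F|%N => k; elim: k F Hk => [|k IH] F Hk sFG.
  have -> : F = G.
    apply/eqP; rewrite eqEsubset sFG /=; apply/subsetP => z zG.
    apply/negPn/negP => zF.
    have : (0 < #|G :\: F|)%N by apply/card_gt0P; exists z; rewrite inE zF zG.
    by rewrite Hk.
  by [].
have [z zGF] : exists z, z \in G :\: F.
  by apply/card_gt0P; rewrite Hk.
move: zGF; rewrite inE => /andP[zF zG].
apply: le_trans (Phi_step_ge F z) _.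
apply: IH.
  have := cardsD1 z (G :\: F); rewrite Hk inE zF zG /=.
  have -> : (G :\: F) :\ z = G :\: (z |: F).
    by apply/setP => y; rewrite !inE; case: (y == z).
  lia.
by rewrite subUset sub1set zG sFG.
Qed.

Lemma Phi0 : Phi set0 = 0.
Proof. by rewrite /Phi !set0I kap0; lia. Qed.

Lemma Phi_ge0 (F : {set E}) : 0 <= Phi F.
Proof. by rewrite -Phi0; apply: Phi_mono; apply: sub0set. Qed.

Lemma Phi_strict (F : {set E}) e (S : {set colour}) : S \in [:: col_my; col_yc; col_mc] ->
  ~~ dl ends F e -> col e \in S -> dl ends (F :&: cls S) e -> Phi F + 1 <= Phi (e |: F).
Proof.
move=> SP d cS dS'; rewrite Phi_step (negbTE d).
have : dS F e S by rewrite /dS cS dS'.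
rewrite !inE in SP; case/or3P: SP => /eqP->; lia.
Qed.

Lemma Phi_flat (F : {set E}) e :
  (connect (adjF ends F) (ends e).1 (ends e).2 ->
   connect (adjF ends (F :&: cls [set col e])) (ends e).1 (ends e).2) ->
  Phi (e |: F) = Phi F.
Proof.
move=> H; rewrite Phi_step.
have hS : forall S, dS F e S = (col e \in S) && dl ends F e.
  move=> S; rewrite /dS; case cS: (col e \in S) => //=.
  apply/idP/idP => [|d]; last by apply: dl_mono d; apply: subsetIl.
  apply: contra => /H; apply: connect_mono.
  by apply/subsetP => z; rewrite !inE => /andP[-> /eqP ->]; rewrite cS.
rewrite !hS; have := two_pairs (col e).
case: (dl ends F e); rewrite ?andbT ?andbF;
by case: (col e \in col_my); case: (col e \in col_yc); case: (col e \in col_mc) => /= H'; lia.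
Qed.

End C.

Section S.
Variables (n : nat) (E : finType) (ends : E -> 'I_n * 'I_n) (col : E -> colour).

Lemma comp_ofE S x : comp_of ends col S x = compF ends (cls col S) x.
Proof.
apply/setP => y; rewrite !inE; apply: eq_connect => u v.
by apply: eq_existsb => f; rewrite inE.
Qed.

Lemma sum_val S :
  (\sum_(C in components ends col) Defs.val ends col S C)%N = kap ends (cls col S).
Proof.
set f := compF ends (cls col S).
set g := compF ends (cls col col_all).
have compsE : components ends col = [set g x | x : 'I_n].
  by apply: eq_imset => x; rewrite comp_ofE.
set Q := [set f x | x : 'I_n].
have fg : forall x y, y \in f x -> y \in g x.
  move=> x y; rewrite !inE; apply: connect_mono.
  by apply/subsetP => z; rewrite !inE.
have key : forall y C, C \in components ends col -> (f y \subset C) = (C == g y).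
  move=> y C; rewrite compsE => /imsetP[x _ ->].
  apply/idP/idP => [H|/eqP->].
    have : y \in g x by apply: (subsetP H); rewrite inE connect0.
    by rewrite inE -compF_eq.
  by apply/subsetP => z; apply: fg.
have valE : forall C, C \in components ends col ->
    Defs.val ends col S C = (\sum_(X in Q) (X \subset C))%N.
  move=> C HC; rewrite /Defs.val.
  have -> : [set comp_of ends col S x | x in C] = [set X in Q | X \subset C].
    apply/setP => X; rewrite !inE; apply/imsetP/andP => [[y yC ->]|[/imsetP[y _ ->] sub]].
      rewrite comp_ofE; split; first exact: imset_f.
      move: HC yC; rewrite compsE => /imsetP[x _ ->] yC.
      apply/subsetP => z zf; rewrite inE.
      by move: (fg _ _ zf); rewrite inE; apply: connect_trans; rewrite inE in yC.
    by exists y; [apply: (subsetP sub); rewrite inE connect0 | rewrite comp_ofE].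
  rewrite -sum1_card (eq_bigl (fun X => (X \in Q) && (X \subset C))); last by move=> X; rewrite inE.
  by rewrite big_mkcondr; apply: eq_bigr => X _; case: (X \subset C).
rewrite (eq_bigr _ valE) exchange_big /= /kap -/f -sum1_card.
apply: eq_bigr => X /imsetP[y _ ->].
rewrite (eq_bigr (fun C => (C == g y) : nat)); last by move=> C HC; rewrite key.
rewrite (bigD1 (g y)) /=; last by rewrite compsE imset_f.
rewrite eqxx big1 // => C /andP[_ /negbTE ->] //.
Qed.

Lemma card_comps : #|components ends col| = kap ends setT.
Proof.
have E1 : comp_of ends col col_all =1 compF ends setT.
  move=> x; rewrite comp_ofE; congr compF.
  by apply/setP => z; rewrite !inE.
by rewrite /kap /components (eq_imset _ E1).
Qed.

Local Open Scope ring_scope.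

Lemma SigmaE : Sigma ends col =
  (kap ends (cls col col_my))%:Z + (kap ends (cls col col_yc))%:Z
  + (kap ends (cls col col_mc))%:Z - 2 * (kap ends setT)%:Z.
Proof.
rewrite /Sigma sumrB !big_split /= -!sum_val -card_comps.
have hs : forall F : {set 'I_n} -> nat,
   \sum_(C in components ends col) (F C)%:Z = (\sum_(C in components ends col) F C)%N%:Z.
  by move=> F; rewrite (big_morph Posz PoszD (erefl (Posz 0))).
rewrite !hs sumr_const.
rewrite -mulr_natl; lia.
Qed.

Lemma PhiT : Phi ends col setT = n%:Z - Sigma ends col.
Proof. by rewrite SigmaE /Phi !setTI; lia. Qed.

End S.

Lemma val_ordS k (l : 'I_k.+1) : val (ordS l) = if (l < k)%N then l.+1 else 0%N.
Proof.
rewrite /ordS /=; case: ifP => H; first by rewrite modn_small.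
have -> : nat_of_ord l = k by have := ltn_ord l; lia.
by rewrite modnn.
Qed.

Definition dd (k i l : nat) := if (i < l)%N then (l - i - 1)%N else (l + k - i)%N.

Section Cyc.
Variables (n : nat) (E : finType) (ends : E -> 'I_n * 'I_n) (col : E -> colour).

Lemma joins2 f x y x' y' : joins ends f x y -> joins ends f x' y' ->
  (x = x' /\ y = y') \/ (x = y' /\ y = x').
Proof.
move=> /joins_ab H /joins_ab H'.
case/orP: H => /andP[/eqP-> /eqP->]; case/orP: H' => /andP[/eqP-> /eqP->]; tauto.
Qed.

Variables (k : nat) (v : 'I_k.+1 -> 'I_n) (e : 'I_k.+1 -> E) (i : 'I_k.+1).
Hypothesis cyc : is_cycle ends v e.

Let d (l : 'I_k.+1) := dd k i l.

Lemma d_le l : (d l <= k)%N.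
Proof. rewrite /d /dd; have := ltn_ord l; have := ltn_ord i; case: ifP; lia. Qed.

Lemma d_inj l m : d l = d m -> l = m.
Proof.
rewrite /d /dd => H; apply: val_inj => /=; have := ltn_ord l; have := ltn_ord m;
have := ltn_ord i; move: H; case: ifP; case: ifP; lia.
Qed.

Lemma d_i : d i = k.
Proof. by rewrite /d /dd ltnn; have := ltn_ord i; lia. Qed.

Lemma d_S l : l != i -> d (ordS l) = (d l).+1.
Proof.
move=> /eqP li; have li' : nat_of_ord l <> nat_of_ord i by move=> H; apply: li; apply: val_inj.
rewrite /d /dd val_ordS; have Hl := ltn_ord l; have Hi := ltn_ord i.
case H2: (l < k)%N => /=.
all: do ?[case: ifP => ?]; lia.
Qed.

Lemma d_Si : d (ordS i) = 0%N.
Proof.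
rewrite /d /dd val_ordS; have Hi := ltn_ord i.
case H2: (i < k)%N => /=.
all: do ?[case: ifP => ?]; lia.
Qed.

Let K := [set e l | l : 'I_k.+1].
Let F := K :\ e i.

Lemma cyc_conn : connect (adjF ends F) (ends (e i)).1 (ends (e i)).2.
Proof.
case: cyc => vinj [einj jn].
have H : forall t, (t <= k)%N -> exists l, d l = t /\ connect (adjF ends F) (v (ordS i)) (v l).
  elim=> [|t IH] tk.
    by exists (ordS i); rewrite d_Si connect0.
  have [l [dl cl]] := IH (ltnW tk).
  have li : l != i by apply/eqP => li; move: dl; rewrite li d_i; lia.
  exists (ordS l); split; first by rewrite d_S // dl.
  apply: connect_trans cl (connect1 _); apply/existsP; exists (e l).
  rewrite jn andbT !inE imset_f // andbT.
  by apply/eqP => /einj /eqP; rewrite (negbTE li).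
have [l [dl cl]] := H k (leqnn k).
have li : l = i by apply: d_inj; rewrite dl d_i.
subst l.
have := jn i; rewrite /joins => /orP[]/eqP->/=; first by rewrite csym.
done.
Qed.

Variable (j : 'I_k.+1) (S : {set colour}).
Hypotheses (ciS : col (e i) \in S) (cjS : col (e j) \notin S).

Lemma cyc_cut : dl ends (F :&: cls col S) (e i).
Proof.
case: cyc => vinj [einj jn].
have ij : i != j by apply/eqP => ij; move: ciS cjS; rewrite ij => ->.
pose A := [set x | [exists l, (x == v l) && (d l <= d j)%N]].
have memA : forall m, (v m \in A) = (d m <= d j)%N.
  move=> m; rewrite inE; apply/existsP/idP => [[l /andP[/eqP /vinj -> //]]|H].
  by exists m; rewrite eqxx H.
have clA : closed (adjF ends (F :&: cls col S)) (mem A).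
  move=> x y /existsP[f /andP[fin jf]]; move: fin; rewrite !inE => /andP[/andP[fi /imsetP[l _ fl]] cf].
  subst f.
  have li : l != i by apply: contra fi => /eqP->.
  have lj : l != j by apply: contraNneq cjS => <-.
  have dlj : d l <> d j by move=> /d_inj /eqP; rewrite (negbTE lj).
  have := d_S li => dS.
  have hx : (v l \in A) = (v (ordS l) \in A) by rewrite !memA dS; lia.
  by move: hx; rewrite !inE; case: (joins2 jf (jn l)) => -[-> ->] // ->.
have dj : (d j < k)%N.
  have := d_le j; have : d j <> k by move=> /esym; rewrite -{1}d_i => /d_inj /eqP; rewrite (negbTE ij).
  lia.
have inA : v (ordS i) \in A by rewrite memA d_Si.
have ninA : v i \notin A by rewrite memA d_i -ltnNge.
rewrite /dl; apply/negP => C.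
have := closed_connect clA C.
have := jn i; rewrite /joins => /orP[]/eqP-> /=.
  by rewrite (negbTE ninA) inA.
by rewrite (negbTE ninA) inA.
Qed.

End Cyc.

Lemma pair_sep (c1 c2 : colour) : c1 != c2 ->
  exists2 S, S \in [:: col_my; col_yc; col_mc] & (c1 \in S) && (c2 \notin S).
Proof.
rewrite /colour in c1 c2 *.
have e0 : forall H : (0 < 3)%N, Ordinal H = magenta by move=> H; apply: val_inj.
have e1 : forall H : (1 < 3)%N, Ordinal H = yellow by move=> H; apply: val_inj.
have e2 : forall H : (2 < 3)%N, Ordinal H = cyan by move=> H; apply: val_inj.
case: c1 => m1 H1; case: c2 => m2 H2.
do 3?[case: m1 H1 => [|m1] H1 //]; do 3?[case: m2 H2 => [|m2] H2 //];
rewrite ?e0 ?e1 ?e2 => neq.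
all: try by rewrite eqxx in neq.
all: solve [ exists col_my; [rewrite !inE eqxx ?orbT //| rewrite /col_my !inE //=]
           | exists col_yc; [rewrite !inE eqxx ?orbT //| rewrite /col_yc !inE //=]
           | exists col_mc; [rewrite !inE eqxx ?orbT //| rewrite /col_mc !inE //=]].
Qed.

Section Fin.
Variables (n : nat) (E : finType) (ends : E -> 'I_n * 'I_n) (col : E -> colour).

Lemma nonmono_Phi k (v : 'I_k.+1 -> 'I_n) (e : 'I_k.+1 -> E) i j :
  is_cycle ends v e -> col (e i) != col (e j) -> (1 <= Phi ends col setT)%R.
Proof.
move=> cyc cij.
have [S SP /andP[ciS cjS]] := pair_sep cij.
set K := [set e l | l : 'I_k.+1].
set F := K :\ e i.
have KF : K = e i |: F by rewrite setD1K // imset_f.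
apply: (@le_trans _ _ (Phi ends col K)); last by apply: Phi_mono; apply: subsetT.
rewrite KF.
have h1 : ~~ dl ends F (e i).
  by rewrite /dl negbK; exact: (cyc_conn i cyc).
have h2 := @Phi_strict _ _ ends col F (e i) S SP h1 ciS (cyc_cut cyc ciS cjS).
have := Phi_ge0 ends col F; move: h2; lia.
Qed.


Lemma mono_conn (amc : all_cycles_monochromatic ends col) (F : {set E}) e :
  e \notin F -> connect (adjF ends F) (ends e).1 (ends e).2 ->
  connect (adjF ends (F :&: cls col [set col e])) (ends e).1 (ends e).2.
Proof.
move=> eF cab.
set a := (ends e).1 in cab *; set b := (ends e).2 in cab *.
rewrite csym; rewrite csym in cab.
have [p [pth uq la]] : exists p, [/\ path (adjF ends F) b p, uniq (b :: p) & last b p = a].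
  case/connectP: cab => p0 pth0 ->.
  by case: (shortenP pth0) => p' h1 h2 _; exists p'.
set k := size p.
pose s := b :: p.
pose v (x : 'I_k.+1) := nth b s x.
pose ch x y := odflt e [pick f | (f \in F) && joins ends f x y].
pose ed (x : 'I_k.+1) := if (x < k)%N then ch (v x) (v (ordS x)) else e.
have vS : forall x : 'I_k.+1, (x < k)%N -> v (ordS x) = nth b s x.+1.
  by move=> x hx; rewrite /v val_ordS hx.
have chP : forall x : 'I_k.+1, (x < k)%N ->
    (ch (v x) (v (ordS x)) \in F) && joins ends (ch (v x) (v (ordS x))) (v x) (v (ordS x)).
  move=> x hx.
  have adj : adjF ends F (v x) (v (ordS x)).
    by rewrite vS // /v /s /=; apply: (pathP b pth).
  rewrite /ch; case: pickP => [f' Hf'|none] //=.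
  by case/existsP: adj => f Hf; move: (none f); rewrite Hf.
have vk : forall x : 'I_k.+1, ~~ (x < k)%N -> v x = a /\ v (ordS x) = b.
  move=> x hx; have xk : nat_of_ord x = k by have := ltn_ord x; lia.
  rewrite /v val_ordS (negbTE hx) xk /s /=; split => //.
  by rewrite -la /k; have := nth_last b (b :: p).
have cyc : is_cycle ends v ed.
  split.
    move=> x y /eqP; rewrite /v nth_uniq ?ltn_ord // => /eqP; apply: val_inj.
  split.
    move=> x y; rewrite /ed; case: ifP => hx; case: ifP => hy.
    - move=> E1; have := chP x hx; have := chP y hy; rewrite E1.
      move=> /andP[_ jy] /andP[_ jx].
      case: (joins2 col jx jy) => -[/eqP h1 /eqP h2].
        by move: h1; rewrite /v nth_uniq ?ltn_ord // => /eqP/val_inj.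
      move: h1 h2; rewrite /v nth_uniq ?ltn_ord // => /eqP h1.
      rewrite nth_uniq ?ltn_ord // => /eqP h2.
      move: h1 h2; rewrite !val_ordS hx hy; lia.
    - by move=> E1; have := chP x hx; rewrite E1 (negbTE eF).
    - by move=> E1; have := chP y hy; rewrite -E1 (negbTE eF).
    - move=> _; apply: val_inj => /=; have := ltn_ord x; have := ltn_ord y.
      move: hx hy; rewrite /k; lia.
  move=> x; rewrite /ed; case: ifP => hx; first by case/andP: (chP x hx).
  have [-> ->] := vk x (negbT hx).
  exact: joins_ends.
have mono := amc k v ed cyc.
have colx : forall x : 'I_k.+1, col (ed x) = col e.
  move=> x; rewrite (mono x ord_max) /ed /=; by rewrite ltnn.
have H : forall t, (t <= k)%N -> connect (adjF ends (F :&: cls col [set col e])) b (nth b s t).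
  elim=> [|t IH] tk; first exact: connect0.
  apply: connect_trans (IH (ltnW tk)) (connect1 _).
  have tk' : (t < k.+1)%N by lia.
  pose x := Ordinal tk'.
  have hx : (x < k)%N by [].
  apply/existsP; exists (ed x).
  have := chP x hx; rewrite /ed hx => /andP[fF jf].
  rewrite !inE fF /=.
  have := colx x; rewrite /ed hx => ->; rewrite eqxx /=.
  by move: jf; rewrite vS.
have := H k (leqnn k).
suff -> : nth b s k = a by [].
by rewrite -la /s /k; have := nth_last b (b :: p).
Qed.

End Fin.

Unset Implicit Arguments. Set Strict Implicit. Set Printing Implicit Defensive.

Theorem proposition5p1 (n : nat) (E : finType) (ends : E -> 'I_n * 'I_n)
    (col : E -> colour) :
  1 <= n ->
  loopless ends ->
  colouring_injective_on_pairs ends col ->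
  (Sigma ends col <= Posz n)%R /\
  (Sigma ends col = Posz n <-> all_cycles_monochromatic ends col).
Proof.
move=> _ _ _.
have PT := PhiT ends col.
split; first by have := Phi_ge0 ends col setT; lia.
split.
  move=> Heq k v e cyc i j; apply/eqP; apply/negPn/negP => neq.
  have := nonmono_Phi cyc neq; lia.
move=> amc.
suff : Phi ends col setT = 0%R by lia.
have H : forall m (F : {set E}), #|F| = m -> Phi ends col F = 0%R.
  elim=> [|m IH] F cF.
    by move/eqP: cF; rewrite cards_eq0 => /eqP ->; exact: Phi0.
  have [e eF] : exists e, e \in F by apply/card_gt0P; rewrite cF.
  rewrite -(setD1K eF) Phi_flat; last first.
    by apply: mono_conn => //; rewrite !inE eqxx.
  apply: IH; have := cardsD1 e F; rewrite eF cF; lia.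
exact: H.
Qed.
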